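(* Let $n\ge 1$, let $F:\mathbb{F}_{2^n}\to\mathbb{F}_{2^n}$ be a function and let $c\in\mathbb{F}_{2^n}^*$. Then ${}_c\Delta_F(a,b)={}_{c^{-1}}\Delta_F(a,bc^{-1})$ for all $a\in\mathbb{F}_{2^n}^*$ and $b\in\mathbb{F}_{2^n}$. If moreover $F$ is a permutation of $\mathbb{F}_{2^n}$, then ${}_c\Delta_F={}_{c^{-1}}\Delta_F$.
   Context: For $F:\mathbb{F}_{2^n}\to\mathbb{F}_{2^n}$ and $c\in\mathbb{F}_{2^n}$, the $c$-differential of $F$ in direction $a$ is ${}_cD_aF(x)=F(x+a)-cF(x)$ (in characteristic $2$ this is $F(x+a)+cF(x)$). For $a,b\in\mathbb{F}_{2^n}$, ${}_c\Delta_F(a,b)$ denotes the number of $x\in\mathbb{F}_{2^n}$ with ${}_cD_aF(x)=b$. The $c$-differential uniformity of $F$ is ${}_c\Delta_F=\max\{{}_c\Delta_F(a,b): a,b\in\mathbb{F}_{2^n},\ a\neq 0 \text{ if } c=1\}$. *)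

(* Defs.v *)
From HB Require Import structures.
From mathcomp Require Import all_boot all_order all_algebra all_field.
Set Implicit Arguments. Unset Strict Implicit. Unset Printing Implicit Defensive.
Import GRing.Theory.
Local Open Scope ring_scope.

Definition cDelta (K : finFieldType) (F : K -> K) (c a b : K) : nat :=
  #|[set x : K | F (x + a) - c * F x == b]|.

Definition cUnif (K : finFieldType) (F : K -> K) (c : K) : nat :=
  \max_(a : K | (c != 1%R) || (a != 0%R)) \max_(b : K) cDelta F c a b.

(* Main.v *)
Require Import Defs.
From HB Require Import structures.
From mathcomp Require Import all_boot all_order all_algebra all_field.
From mathcomp Require Import ring.
Import GRing.Theory.
Local Open Scope ring_scope.

Lemma key (K : finFieldType) (h2 : 2%N \in [pchar K]) (F : K -> K) (c : K)
  (hc : c != 0) (a b : K) : cDelta F c a b = cDelta F c^-1 a (b * c^-1).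
Proof.
rewrite /cDelta.
rewrite -(card_preimset _ (addIr a)).
apply: eq_card => x; rewrite !inE.
rewrite (GRing.addrK_pchar2 h2).
apply/eqP/eqP => H.
- rewrite -H !(GRing.subr_pchar2 h2); field; try exact: hc.
- have hb : b = (b * c^-1) * c by rewrite -mulrA mulVf // mulr1.
  rewrite {1}hb -H !(GRing.subr_pchar2 h2); field; try exact: hc.
Qed.

Theorem mainTheorem1 (K : finFieldType) (n : nat) (hn : (1 <= n)%N)
    (hK : #|K| = (2 ^ n)%N) (F : K -> K) (c : K) (hc : c != 0) :
  (forall a b : K, a != 0 -> cDelta F c a b = cDelta F c^-1 a (b * c^-1)) /\
  (bijective F -> cUnif F c = cUnif F c^-1).
Proof.
have h2 : 2%N \in [pchar K] by apply: (card_finPcharP hK).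
split; first by move=> a b _; apply: key.
move=> _; rewrite /cUnif.
have hc1 : (c != 1) = (c^-1 != 1).
  by rewrite invr_eq1.
rewrite -hc1.
apply: eq_bigr => a _.
under eq_bigr => b _ do rewrite (@key K h2 F c hc).
rewrite (reindex_inj (mulIf hc)) /=; apply: eq_bigr => j _; rewrite mulfK //.
Qed.
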